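(* Let $p,r$ be positive integers and $s=p+2r$. Let $\Phi:U_{ps}(\mathbb{R})\to\mathbb{C}^{r\times p}$ be the map $\Phi(X)=WA^{-1}$, where for $X=(X_0;X_1;X_2;X_3)$ (blocks of $p,p,r,r$ rows) $A=X_0-X_1$ and $W=X_2+iX_3$. Then the complex valued components of $\Phi$ form an orthogonal harmonic family of $\mathbf{GL}_p(\mathbb{R})$-invariant functions on $U_{ps}(\mathbb{R})$, equipped with the semi-Euclidean metric.
   Context: $U_{ps}(\mathbb{R})=\{X\in\mathbb{R}^{(p+s)\times p}: -X_0^tX_0+X_1^tX_1+X_2^tX_2+X_3^tX_3 \text{ is negative definite}\}$; on it $A$ is invertible. $\mathbf{GL}_p(\mathbb{R})$ acts by right multiplication. The semi-Euclidean metric is $(X,Y)=\mathrm{trace}(X^t\mathrm{diag}(-I_p,I_s)Y)$. For a semi-Riemannian manifold $(M,g)$ and complex functions $\phi,\psi$, $\tau(\phi)$ is the Laplace–Beltrami operator (extended complex-linearly) and $\kappa(\phi,\psi)=g(\mathrm{grad}\,\phi,\mathrm{grad}\,\psi)$ with $g$ extended complex-bilinearly. A set $\Omega$ of complex functions is an orthogonal harmonic family if $\tau(\phi)=0$ and $\kappa(\phi,\psi)=0$ for all $\phi,\psi\in\Omega$. *)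

(* Defs.v *)
From HB Require Import structures.
From mathcomp Require Import all_boot all_order all_algebra.
From mathcomp Require Import all_classical all_reals all_analysis.
Set Implicit Arguments. Unset Strict Implicit. Unset Printing Implicit Defensive.
Import Order.TTheory GRing.Theory Num.Theory.
Import numFieldNormedType.Exports.
Local Open Scope ring_scope.
Local Open Scope classical_set_scope.

Section Defs.
Variables (R : realType) (p r : nat).

Definition s := p + (r + r).
Definition Mat := 'M[R]_(p + (p + (r + r)), p).

Definition X0 (X : Mat) : 'M[R]_(p, p) := usubmx X.
Definition X1 (X : Mat) : 'M[R]_(p, p) := usubmx (dsubmx X).
Definition X2 (X : Mat) : 'M[R]_(r, p) := usubmx (dsubmx (dsubmx X)).
Definition X3 (X : Mat) : 'M[R]_(r, p) := dsubmx (dsubmx (dsubmx X)).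

Definition negdef (M : 'M[R]_p) : Prop :=
  forall v : 'cV[R]_p, v != 0 -> (v^T *m M *m v) 0 0 < 0.

Definition Ups : set Mat :=
  [set X | negdef (- ((X0 X)^T *m X0 X) + (X1 X)^T *m X1 X
                   + (X2 X)^T *m X2 X + (X3 X)^T *m X3 X)].

Definition Amat (X : Mat) : 'M[R]_p := X0 X - X1 X.

Definition PhiRe (X : Mat) : 'M[R]_(r, p) := X2 X *m invmx (Amat X).
Definition PhiIm (X : Mat) : 'M[R]_(r, p) := X3 X *m invmx (Amat X).

(* A complex valued function on Mat, as (real part, imaginary part). *)
Definition cfun := ((Mat -> R) * (Mat -> R))%type.

(* signature of the semi-Euclidean metric trace(X^t diag(-I_p, I_s) Y) *)
Definition eps (i : 'I_(p + (p + (r + r)))) : R := if (i < p)%N then -1 else 1.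

Definition pd (i : 'I_(p + (p + (r + r)))) (j : 'I_p) (f : Mat -> R) : Mat -> R :=
  fun X => 'D_(delta_mx i j : Mat) f X.

(* Laplace-Beltrami operator of the (flat) semi-Euclidean metric, real case *)
Definition rtau (f : Mat -> R) : Mat -> R :=
  fun X => \sum_(i < p + (p + (r + r))) \sum_(j < p) eps i * pd i j (pd i j f) X.

Definition rkappa (f h : Mat -> R) : Mat -> R :=
  fun X => \sum_(i < p + (p + (r + r))) \sum_(j < p) eps i * (pd i j f X * pd i j h X).

Definition ctau (phi : cfun) : cfun := (rtau phi.1, rtau phi.2).

(* complex-bilinear extension of kappa *)
Definition ckappa (phi psi : cfun) : cfun :=
  (fun X => rkappa phi.1 psi.1 X - rkappa phi.2 psi.2 X,
   fun X => rkappa phi.1 psi.2 X + rkappa phi.2 psi.1 X).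

(* smoothness needed to make sense of tau, kappa (at least C^2-type derivability
   along every coordinate) *)
Definition coord_twice_derivable (U : set Mat) (f : Mat -> R) : Prop :=
  forall X, U X -> forall i j,
    derivable f X (delta_mx i j : Mat) /\ derivable (pd i j f) X (delta_mx i j : Mat).

Definition orthogonal_harmonic_family (U : set Mat) (Omega : set cfun) : Prop :=
  forall phi psi, Omega phi -> Omega psi ->
    (forall X, U X -> (ctau phi).1 X = 0 /\ (ctau phi).2 X = 0) /\
    (forall X, U X -> (ckappa phi psi).1 X = 0 /\ (ckappa phi psi).2 X = 0).

Definition Phi_comp (a : 'I_r) (b : 'I_p) : cfun :=
  (fun X => PhiRe X a b, fun X => PhiIm X a b).

Definition Phi_components : set cfun := [set Phi_comp a b | a in setT & b in setT].

Definition GLp_invariant (U : set Mat) (phi : cfun) : Prop :=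
  forall X (g : 'M[R]_p), U X -> g \in unitmx ->
    U (X *m g) /\ phi.1 (X *m g) = phi.1 X /\ phi.2 (X *m g) = phi.2 X.

End Defs.

(* Main.v *)
Require Import Defs.
From HB Require Import structures.
From mathcomp Require Import all_boot all_order all_algebra.
From mathcomp Require Import ring lra.
From mathcomp Require Import all_classical all_reals all_analysis.
Set Implicit Arguments. Unset Strict Implicit. Unset Printing Implicit Defensive.
Import Order.TTheory GRing.Theory Num.Theory.
Import numFieldNormedType.Exports.
Local Open Scope ring_scope.
Local Open Scope classical_set_scope.

Section SM.
Variable (F : fieldType).
Lemma mulmx_deltaE m n k (M : 'M[F]_(m, n)) (i : 'I_n) (j : 'I_k) x y :
  (M *m delta_mx i j) x y = M x i * (j == y)%:R.
Proof.
rewrite !mxE (bigD1 i) //= big1 ?addr0; last first.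
  by move=> l /negbTE Hl; rewrite !mxE Hl mulr0.
by rewrite !mxE eqxx eq_sym.
Qed.

Lemma delta_mulmxE m n k (N : 'M[F]_(n, k)) (i : 'I_m) (j : 'I_n) x y :
  (delta_mx i j *m N) x y = (x == i)%:R * N j y.
Proof.
rewrite !mxE (bigD1 j) //= big1 ?addr0; last first.
  by move=> l /negbTE Hl; rewrite !mxE Hl andbF mul0r.
by rewrite !mxE eqxx andbT.
Qed.

Lemma delta_B_delta n (B : 'M[F]_n) i j :
  delta_mx i j *m B *m delta_mx i j = B j i *: delta_mx i j.
Proof.
apply/matrixP => x y; rewrite mulmx_deltaE delta_mulmxE !mxE.
by rewrite [y == j]eq_sym; case: (x == i); case: (j == y); rewrite /= ?mulr0 ?mul0r ?mul1r ?mulr1.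
Qed.

Lemma sherman_mul n (A : 'M[F]_n) (i j : 'I_n) (s : F) :
  A \in unitmx -> 1 + s * invmx A j i != 0 ->
  (A + s *: delta_mx i j) *m
  (invmx A - (s / (1 + s * invmx A j i)) *: (invmx A *m delta_mx i j *m invmx A)) = 1%:M.
Proof.
move=> uA hd.
set B := invmx A; set d := B j i; set k := s / (1 + s * d); set D := delta_mx i j.
rewrite mulmxDl mulmxBr mulmxBr mulmxV // -!scalemxAl -!scalemxAr !mulmxA.
rewrite mulmxV // mul1mx.
have -> : D *m B *m D *m B = d *: (D *m B) by rewrite delta_B_delta scalemxAl.
move: (D *m B) => X.
rewrite !scalerA -[RHS]addr0 -addrA; congr (_ + _).
rewrite -scaleNr -scalerBl -scalerDl.
have -> : - k + (s - s * k * d) = 0 by rewrite /k; field.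
by rewrite scale0r.
Qed.

Lemma inv_uniq n (A B : 'M[F]_n) : A *m B = 1%:M -> invmx A = B.
Proof.
move=> H; have [uA _] := mulmx1_unit H.
by rewrite -[invmx A]mulmx1 -H mulmxA mulVmx // mul1mx.
Qed.

Lemma sherman n (A : 'M[F]_n) (i j : 'I_n) (s : F) :
  A \in unitmx -> 1 + s * invmx A j i != 0 ->
  (A + s *: delta_mx i j \in unitmx) /\
  invmx (A + s *: delta_mx i j) =
  invmx A - (s / (1 + s * invmx A j i)) *: (invmx A *m delta_mx i j *m invmx A).
Proof.
move=> uA hd; have H := sherman_mul uA hd.
by split; [exact: (mulmx1_unit H).1 | exact: inv_uniq].
Qed.

Lemma mul_delta_mulE m n k l (M : 'M[F]_(m, n)) (N : 'M[F]_(k, l)) i j x y :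
  (M *m delta_mx i j *m N) x y = M x i * N j y.
Proof.
rewrite -mulmxA mxE (bigD1 i) //= big1 ?addr0; last first.
  by move=> l' /negbTE Hl; rewrite delta_mulmxE Hl mul0r mulr0.
by rewrite delta_mulmxE eqxx mul1r.
Qed.

Lemma entryB m n (M N : 'M[F]_(m, n)) x y : (M - N) x y = M x y - N x y.
Proof. by rewrite !mxE. Qed.
Lemma entryZ m n k (M : 'M[F]_(m, n)) x y : (k *: M) x y = k * M x y.
Proof. by rewrite !mxE. Qed.
End SM.

Section C.
Variable R : realType.
Lemma dnbhs_neq0 : \forall h \near (0:R)^', h != 0.
Proof. exact: nbhs_dnbhs_neq. Qed.

Lemma lin0 (a b : R) : (fun h : R => a + b * h) @ 0^' --> a.
Proof.
apply: cvg_within_filter.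
have H : (fun h : R => a + b * h) @ 0 --> a + b * 0.
  apply: cvgD; first exact: cvg_cst.
  apply: cvgMl_tmp; exact: cvg_id.
by rewrite mulr0 addr0 in H.
Qed.

Lemma rat0 (a b u : R) :
  (fun h : R => (a + b * h) / (1 + u * h) ^+ 2) @ 0^' --> a.
Proof.
have H2 := @lin0 1 u.
have H2' : ((fun h : R => 1 + u * h) \* (fun h : R => 1 + u * h)) @ 0^' --> (1 * 1 : R).
  exact: cvgM.
rewrite mulr1 in H2'.
have H3 : (fun h : R => ((1 + u * h) * (1 + u * h))^-1) @ 0^' --> (1^-1 : R).
  exact: cvgV.
have : ((fun h : R => a + b * h) \* (fun h : R => ((1 + u * h) * (1 + u * h))^-1)) @ 0^' --> (a * 1^-1 : R).
  by apply: cvgM; [exact: lin0 | exact: H3].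
rewrite divr1; apply: cvg_trans; apply: near_eq_cvg.
by near=> h => /=; rewrite expr2.
Unshelve. all: by end_near.
Qed.

End C.

Section M.
Variables (R : realType) (p r : nat).
Local Notation Mat := (Mat R p r).

Lemma D_quot (f : Mat -> R) (Y E : Mat) (q : R -> R) (L : R) :
  (\forall h \near 0^', h^-1 * (f (h *: E + Y) - f Y) = q h) ->
  q @ 0^' --> L -> derivable f Y E /\ 'D_E f Y = L.
Proof.
move=> Hq HL.
have H : (fun h : R => h^-1 *: ((f \o shift Y) (h *: E) - f Y)) @ 0^' --> L.
  apply: cvg_trans HL; apply: near_eq_cvg; near=> h; rewrite -(near Hq h) //.
split; first by apply/cvg_ex; exists L.
by rewrite /derive; apply: cvg_lim.
Unshelve. all: by end_near.
Qed.

Lemma LX0 (E Z : Mat) t : X0 (t *: E + Z) = X0 Z + t *: X0 E.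
Proof. by rewrite /X0 linearD linearZ addrC. Qed.
Lemma LX1 (E Z : Mat) t : X1 (t *: E + Z) = X1 Z + t *: X1 E.
Proof. by rewrite /X1 !linearD !linearZ addrC. Qed.
Lemma LX2 (E Z : Mat) t : X2 (t *: E + Z) = X2 Z + t *: X2 E.
Proof. by rewrite /X2 !linearD !linearZ addrC. Qed.
Lemma LX3 (E Z : Mat) t : X3 (t *: E + Z) = X3 Z + t *: X3 E.
Proof. by rewrite /X3 !linearD !linearZ addrC. Qed.
Lemma LA (E Z : Mat) t : Amat (t *: E + Z) = Amat Z + t *: Amat E.
Proof. by rewrite /Amat LX0 LX1 scalerBr; rewrite addrACA opprD. Qed.

Definition E0 (i : 'I_p) (j : 'I_p) : Mat := delta_mx (lshift (p + (r + r)) i) j.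
Definition E1 (i : 'I_p) (j : 'I_p) : Mat := delta_mx (rshift p (lshift (r + r) i)) j.
Definition E2 (i : 'I_r) (j : 'I_p) : Mat := delta_mx (rshift p (rshift p (lshift r i))) j.
Definition E3 (i : 'I_r) (j : 'I_p) : Mat := delta_mx (rshift p (rshift p (rshift r i))) j.

Lemma E0_blocks i j : [/\ X0 (E0 i j) = delta_mx i j, X1 (E0 i j) = 0,
  X2 (E0 i j) = 0 & X3 (E0 i j) = 0].
Proof.
by rewrite /X0 /X1 /X2 /X3 /E0 delta_mx_ushift col_mxKu col_mxKd !linear0.
Qed.
Lemma E1_blocks i j : [/\ X0 (E1 i j) = 0, X1 (E1 i j) = delta_mx i j,
  X2 (E1 i j) = 0 & X3 (E1 i j) = 0].
Proof.
by rewrite /X0 /X1 /X2 /X3 /E1 delta_mx_dshift !col_mxKu !col_mxKd delta_mx_ushift !col_mxKu !col_mxKd ?linear0.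
Qed.
Lemma E2_blocks i j : [/\ X0 (E2 i j) = 0, X1 (E2 i j) = 0,
  X2 (E2 i j) = delta_mx i j & X3 (E2 i j) = 0].
Proof.
rewrite /X0 /X1 /X2 /X3 /E2 !delta_mx_dshift delta_mx_ushift; by split; do 4 rewrite ?col_mxKu ?col_mxKd ?linear0.
Qed.
Lemma E3_blocks i j : [/\ X0 (E3 i j) = 0, X1 (E3 i j) = 0,
  X2 (E3 i j) = 0 & X3 (E3 i j) = delta_mx i j].
Proof.
rewrite /X0 /X1 /X2 /X3 /E3 !delta_mx_dshift; by split; do 4 rewrite ?col_mxKu ?col_mxKd ?linear0.
Qed.


Variables (a : 'I_r) (b : 'I_p).
Definition fW (Wf : Mat -> 'M[R]_(r, p)) (Y : Mat) : R := (Wf Y *m invmx (Amat Y)) a b.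
Definition cW (Wf : Mat -> 'M[R]_(r, p)) (i j : 'I_p) (Y : Mat) : R :=
  (Wf Y *m invmx (Amat Y)) a i * invmx (Amat Y) j b.

Lemma near_nz (s d : R) : s = 1 \/ s = -1 ->
  \forall h \near (0:R)^', h != 0 /\ 1 + s * h * d != 0.
Proof.
move=> Hs.
have e0 : 0 < (`|d| + 1)^-1 by rewrite invr_gt0 ltr_wpDl.
near=> h; split; first by near: h; exact: dnbhs_neq0.
have Hh : `|h| < (`|d| + 1)^-1 by near: h; exact: dnbhs0_lt.
move: Hh; rewrite -[X in _ < X]mul1r ltr_pdivlMr ?ltr_wpDl // mulrDr mulr1 => Hh.
apply/eqP => H.
have : `|s * h * d| = 1.
  have -> : s * h * d = -1 by move: H; set z := s * h * d; lra.
  by rewrite normrN normr1.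
rewrite !normrM.
have -> : `|s| = 1 by case: Hs => ->; rewrite ?normrN normr1.
rewrite mul1r => H1.
have : 0 <= `|h| by [].
lra.
Unshelve. all: by end_near.
Qed.

Lemma rank1_line Wf E s i j Y t :
  (forall t Z, Wf (t *: E + Z) = Wf Z) ->
  (forall t Z, Amat (t *: E + Z) = Amat Z + (s * t) *: delta_mx i j) ->
  Amat Y \in unitmx -> 1 + s * t * invmx (Amat Y) j i != 0 ->
  [/\ Amat (t *: E + Y) \in unitmx,
     fW Wf (t *: E + Y) =
       fW Wf Y - (s * t / (1 + s * t * invmx (Amat Y) j i)) * cW Wf i j Y
   & cW Wf i j (t *: E + Y) = cW Wf i j Y / (1 + s * t * invmx (Amat Y) j i) ^+ 2].
Proof.
move=> HW HA uA hd.
have [uA' hinv] := sherman uA hd.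
rewrite /fW /cW HA HW hinv.
move: (invmx (Amat Y)) hd => B hd.
set k := s * t / (1 + s * t * B j i).
split => //.
  rewrite mulmxBr -scalemxAr entryB entryZ !mulmxA mul_delta_mulE.
  by rewrite mulrA.
rewrite mulmxBr -scalemxAr !entryB !entryZ !mulmxA !mul_delta_mulE.
rewrite /k; field; done.
Qed.


Lemma rank1_D Wf E s i j Y :
  s = 1 \/ s = -1 ->
  (forall t Z, Wf (t *: E + Z) = Wf Z) ->
  (forall t Z, Amat (t *: E + Z) = Amat Z + (s * t) *: delta_mx i j) ->
  Amat Y \in unitmx ->
  derivable (fW Wf) Y E /\ 'D_E (fW Wf) Y = - s * cW Wf i j Y.
Proof.
move=> Hs HW HA uA.
set d := invmx (Amat Y) j i; set c := cW Wf i j Y.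
apply: (@D_quot _ _ _ (fun h => (- s * c + (- s * c * s * d) * h) / (1 + (s * d) * h) ^+ 2)).
  have := @near_nz s d Hs; apply: filterS => h [h0 hd].
  have [_ -> _] := rank1_line HW HA uA hd.
  have hd' : 1 + s * d * h != 0 by rewrite mulrAC.
  rewrite -/d -/c; field; rewrite hd' h0 //.
exact: rat0.
Qed.

Lemma rank1_DD Wf E s i j Y :
  s = 1 \/ s = -1 ->
  (forall t Z, Wf (t *: E + Z) = Wf Z) ->
  (forall t Z, Amat (t *: E + Z) = Amat Z + (s * t) *: delta_mx i j) ->
  Amat Y \in unitmx ->
  derivable ('D_E (fW Wf)) Y E /\
  'D_E ('D_E (fW Wf)) Y = 2 * invmx (Amat Y) j i * cW Wf i j Y.
Proof.
move=> Hs HW HA uA.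
set d := invmx (Amat Y) j i; set c := cW Wf i j Y.
apply: (@D_quot _ _ _ (fun h => (2 * d * c + (s * c * d * d) * h) / (1 + (s * d) * h) ^+ 2)).
  have := @near_nz s d Hs; apply: filterS => h [h0 hd].
  have [uA' _ Hc] := rank1_line HW HA uA hd.
  rewrite (rank1_D Hs HW HA uA').2 (rank1_D Hs HW HA uA).2 Hc.
  have hd' : 1 + s * d * h != 0 by rewrite mulrAC.
  rewrite -/d -/c.
  by case: Hs hd hd' => -> hd hd'; field; rewrite ?mul1r in hd' *; rewrite hd' h0.
exact: rat0.
Qed.

Lemma lin_line Wf E D Y t :
  (forall t Z, Wf (t *: E + Z) = Wf Z + t *: D) ->
  (forall t Z, Amat (t *: E + Z) = Amat Z) ->
  fW Wf (t *: E + Y) = fW Wf Y + t * (D *m invmx (Amat Y)) a b.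
Proof.
move=> HW HA; rewrite /fW HW HA mulmxDl -scalemxAl.
by rewrite [in LHS]mxE [X in _ + X = _]mxE.
Qed.

Lemma lin_D Wf E D Y :
  (forall t Z, Wf (t *: E + Z) = Wf Z + t *: D) ->
  (forall t Z, Amat (t *: E + Z) = Amat Z) ->
  derivable (fW Wf) Y E /\ 'D_E (fW Wf) Y = (D *m invmx (Amat Y)) a b.
Proof.
move=> HW HA.
apply: (@D_quot _ _ _ (fun h => ((D *m invmx (Amat Y)) a b + 0 * h) / (1 + 0 * h) ^+ 2)).
  have := @near_nz 1 0 (or_introl erefl); apply: filterS => h [h0 _].
  rewrite (lin_line _ _ HW HA); field; rewrite h0 //.
exact: rat0.
Qed.

Lemma lin_DD Wf E D Y :
  (forall t Z, Wf (t *: E + Z) = Wf Z + t *: D) ->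
  (forall t Z, Amat (t *: E + Z) = Amat Z) ->
  derivable ('D_E (fW Wf)) Y E /\ 'D_E ('D_E (fW Wf)) Y = 0.
Proof.
move=> HW HA.
apply: (@D_quot _ _ _ (fun h => (0 + 0 * h) / (1 + 0 * h) ^+ 2)).
  have := @near_nz 1 0 (or_introl erefl); apply: filterS => h [h0 _].
  rewrite (lin_D _ HW HA).2 (lin_D _ HW HA).2 HA; field; rewrite h0 //.
exact: rat0.
Qed.

End M.

Section N.
Variables (R : realType) (p r : nat).
Local Notation Mat := (Mat R p r).

Lemma HA0 (i j : 'I_p) t (Z : Mat) :
  Amat (t *: E0 R r i j + Z) = Amat Z + (1 * t) *: delta_mx i j.
Proof.
rewrite LA; congr (_ + _); rewrite /Amat.
by case: (E0_blocks R r i j) => -> -> _ _; rewrite subr0 mul1r.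
Qed.
Lemma HA1 (i j : 'I_p) t (Z : Mat) :
  Amat (t *: E1 R r i j + Z) = Amat Z + (-1 * t) *: delta_mx i j.
Proof.
rewrite LA; congr (_ + _); rewrite /Amat.
by case: (E1_blocks R r i j) => -> -> _ _; rewrite sub0r scalerN mulN1r scaleNr.
Qed.
Lemma HA2 (i : 'I_r) (j : 'I_p) t (Z : Mat) :
  Amat (t *: E2 R i j + Z) = Amat Z.
Proof.
rewrite LA /Amat.
by case: (E2_blocks R i j) => -> -> _ _; rewrite subr0 scaler0 addr0.
Qed.
Lemma HA3 (i : 'I_r) (j : 'I_p) t (Z : Mat) :
  Amat (t *: E3 R i j + Z) = Amat Z.
Proof.
rewrite LA /Amat.
by case: (E3_blocks R i j) => -> -> _ _; rewrite subr0 scaler0 addr0.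
Qed.

Definition isW (Wf : Mat -> 'M[R]_(r, p)) := Wf = @X2 R p r \/ Wf = @X3 R p r.

Lemma HW0 Wf (i j : 'I_p) t (Z : Mat) : isW Wf -> Wf (t *: E0 R r i j + Z) = Wf Z.
Proof.
case=> ->; [rewrite LX2 | rewrite LX3];
by case: (E0_blocks R r i j) => _ _ H2 H3; rewrite ?H2 ?H3 scaler0 addr0.
Qed.
Lemma HW1 Wf (i j : 'I_p) t (Z : Mat) : isW Wf -> Wf (t *: E1 R r i j + Z) = Wf Z.
Proof.
case=> ->; [rewrite LX2 | rewrite LX3];
by case: (E1_blocks R r i j) => _ _ H2 H3; rewrite ?H2 ?H3 scaler0 addr0.
Qed.
Lemma HW23 Wf (E : Mat) t (Z : Mat) : isW Wf -> Wf (t *: E + Z) = Wf Z + t *: Wf E.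
Proof. by case=> ->; [rewrite LX2 | rewrite LX3]. Qed.

Lemma eps0 (i : 'I_p) : eps R (lshift (p + (r + r)) i) = -1 :> R.
Proof. by rewrite /eps /= ltn_ord. Qed.
Lemma epsS (i : 'I_(p + (r + r))) : eps R (rshift p i) = 1 :> R.
Proof. by rewrite /eps /= ltnNge leq_addr. Qed.

Lemma tau_zero a b Wf (X : Mat) : isW Wf -> Amat X \in unitmx ->
  rtau (fW a b Wf) X = 0.
Proof.
move=> hW uA; rewrite /rtau !big_split_ord /=.
set V := fun (i j : 'I_p) => 2 * invmx (Amat X) j i * cW a b Wf i j X.
have B0 : \sum_(i < p) \sum_(j < p) eps R (lshift (p + (r + r)) i) *
   pd (lshift (p + (r + r)) i) j (pd (lshift (p + (r + r)) i) j (fW a b Wf)) X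
   = - \sum_(i < p) \sum_(j < p) V i j.
  rewrite -sumrN; apply: eq_bigr => i _; rewrite -sumrN; apply: eq_bigr => j _.
  rewrite eps0 mulN1r /pd.
  by rewrite (rank1_DD a b (E := E0 R r i j) (or_introl erefl) (fun t Z => HW0 i j t Z hW) (HA0 i j) uA).2.
have B1 : \sum_(i < p) \sum_(j < p) eps R (rshift p (lshift (r + r) i)) *
   pd (rshift p (lshift (r + r) i)) j (pd (rshift p (lshift (r + r) i)) j (fW a b Wf)) X
   = \sum_(i < p) \sum_(j < p) V i j.
  apply: eq_bigr => i _; apply: eq_bigr => j _.
  rewrite epsS mul1r /pd.
  by rewrite (rank1_DD a b (E := E1 R r i j) (or_intror erefl) (fun t Z => HW1 i j t Z hW) (HA1 i j) uA).2.
have B2 : \sum_(i < r) \sum_(j < p) eps R (rshift p (rshift p (lshift r i))) *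
   pd (rshift p (rshift p (lshift r i))) j (pd (rshift p (rshift p (lshift r i))) j (fW a b Wf)) X
   = 0.
  apply: big1 => i _; apply: big1 => j _.
  rewrite epsS mul1r /pd.
  have := (lin_DD a b X (fun t Z => @HW23 Wf (E2 R i j) t Z hW) (HA2 i j)).2.
  by rewrite /E2.
have B3 : \sum_(i < r) \sum_(j < p) eps R (rshift p (rshift p (rshift r i))) *
   pd (rshift p (rshift p (rshift r i))) j (pd (rshift p (rshift p (rshift r i))) j (fW a b Wf)) X
   = 0.
  apply: big1 => i _; apply: big1 => j _.
  rewrite epsS mul1r /pd.
  have := (lin_DD a b X (fun t Z => @HW23 Wf (E3 R i j) t Z hW) (HA3 i j)).2.
  by rewrite /E3.
have E (x y z w S : R) : x = - S -> y = S -> z = 0 -> w = 0 -> x + (y + (z + w)) = 0.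
  by move=> -> -> -> ->; rewrite !addr0 addNr.
exact: (E _ _ _ _ _ B0 B1 B2 B3).
Qed.

Lemma deriv_ok a b Wf (X : Mat) : isW Wf -> Amat X \in unitmx ->
  forall i j, derivable (fW a b Wf) X (delta_mx i j) /\
              derivable (pd i j (fW a b Wf)) X (delta_mx i j).
Proof.
move=> hW uA i j.
case: (split_ordP i) => k ->{i}.
  have H1 := (rank1_D a b (E := E0 R r k j) (or_introl erefl) (fun t Z => HW0 k j t Z hW) (HA0 k j) uA).1.
  have H2 := (rank1_DD a b (E := E0 R r k j) (or_introl erefl) (fun t Z => HW0 k j t Z hW) (HA0 k j) uA).1.
  by split.
case: (split_ordP k) => k' ->{k}.
  have H1 := (rank1_D a b (E := E1 R r k' j) (or_intror erefl) (fun t Z => HW1 k' j t Z hW) (HA1 k' j) uA).1.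
  have H2 := (rank1_DD a b (E := E1 R r k' j) (or_intror erefl) (fun t Z => HW1 k' j t Z hW) (HA1 k' j) uA).1.
  by split.
case: (split_ordP k') => k ->{k'}.
  have H1 := (lin_D a b X (fun t Z => @HW23 Wf (E2 R k j) t Z hW) (HA2 k j)).1.
  have H2 := (lin_DD a b X (fun t Z => @HW23 Wf (E2 R k j) t Z hW) (HA2 k j)).1.
  by split.
have H1 := (lin_D a b X (fun t Z => @HW23 Wf (E3 R k j) t Z hW) (HA3 k j)).1.
have H2 := (lin_DD a b X (fun t Z => @HW23 Wf (E3 R k j) t Z hW) (HA3 k j)).1.
by split.
Qed.

Lemma kappa_val a b a' b' Wf Wg (X : Mat) : isW Wf -> isW Wg -> Amat X \in unitmx ->
  rkappa (fW a b Wf) (fW a' b' Wg) X =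
  \sum_(i < r) \sum_(j < p) ((Wf (E2 R i j) *m invmx (Amat X)) a b *
                             (Wg (E2 R i j) *m invmx (Amat X)) a' b') +
  \sum_(i < r) \sum_(j < p) ((Wf (E3 R i j) *m invmx (Amat X)) a b *
                             (Wg (E3 R i j) *m invmx (Amat X)) a' b').
Proof.
move=> hf hg uA; rewrite /rkappa !big_split_ord /=.
set V := fun (i j : 'I_p) => cW a b Wf i j X * cW a' b' Wg i j X.
have B0 : \sum_(i < p) \sum_(j < p) eps R (lshift (p + (r + r)) i) *
   (pd (lshift (p + (r + r)) i) j (fW a b Wf) X * pd (lshift (p + (r + r)) i) j (fW a' b' Wg) X)
   = - \sum_(i < p) \sum_(j < p) V i j.
  rewrite -sumrN; apply: eq_bigr => i _; rewrite -sumrN; apply: eq_bigr => j _.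
  have H1 := (rank1_D a b (E := E0 R r i j) (or_introl erefl) (fun t Z => HW0 i j t Z hf) (HA0 i j) uA).2.
  have H2 := (rank1_D a' b' (E := E0 R r i j) (or_introl erefl) (fun t Z => HW0 i j t Z hg) (HA0 i j) uA).2.
  rewrite /E0 in H1 H2; rewrite eps0 /pd H1 H2 /V; ring.
have B1 : \sum_(i < p) \sum_(j < p) eps R (rshift p (lshift (r + r) i)) *
   (pd (rshift p (lshift (r + r) i)) j (fW a b Wf) X * pd (rshift p (lshift (r + r) i)) j (fW a' b' Wg) X)
   = \sum_(i < p) \sum_(j < p) V i j.
  apply: eq_bigr => i _; apply: eq_bigr => j _.
  have H1 := (rank1_D a b (E := E1 R r i j) (or_intror erefl) (fun t Z => HW1 i j t Z hf) (HA1 i j) uA).2.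
  have H2 := (rank1_D a' b' (E := E1 R r i j) (or_intror erefl) (fun t Z => HW1 i j t Z hg) (HA1 i j) uA).2.
  rewrite /E1 in H1 H2; rewrite epsS /pd H1 H2 /V; ring.
have B2 : \sum_(i < r) \sum_(j < p) eps R (rshift p (rshift p (lshift r i))) *
   (pd (rshift p (rshift p (lshift r i))) j (fW a b Wf) X * pd (rshift p (rshift p (lshift r i))) j (fW a' b' Wg) X)
   = \sum_(i < r) \sum_(j < p) ((Wf (E2 R i j) *m invmx (Amat X)) a b *
                             (Wg (E2 R i j) *m invmx (Amat X)) a' b').
  apply: eq_bigr => i _; apply: eq_bigr => j _.
  have H1 := (lin_D a b X (fun t Z => @HW23 Wf (E2 R i j) t Z hf) (HA2 i j)).2.
  have H2 := (lin_D a' b' X (fun t Z => @HW23 Wg (E2 R i j) t Z hg) (HA2 i j)).2.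
  rewrite /E2 in H1 H2; rewrite epsS /pd H1 H2 mul1r //.
have B3 : \sum_(i < r) \sum_(j < p) eps R (rshift p (rshift p (rshift r i))) *
   (pd (rshift p (rshift p (rshift r i))) j (fW a b Wf) X * pd (rshift p (rshift p (rshift r i))) j (fW a' b' Wg) X)
   = \sum_(i < r) \sum_(j < p) ((Wf (E3 R i j) *m invmx (Amat X)) a b *
                             (Wg (E3 R i j) *m invmx (Amat X)) a' b').
  apply: eq_bigr => i _; apply: eq_bigr => j _.
  have H1 := (lin_D a b X (fun t Z => @HW23 Wf (E3 R i j) t Z hf) (HA3 i j)).2.
  have H2 := (lin_D a' b' X (fun t Z => @HW23 Wg (E3 R i j) t Z hg) (HA3 i j)).2.
  rewrite /E3 in H1 H2; rewrite epsS /pd H1 H2 mul1r //.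
have E (x y z w z' w' S : R) : x = - S -> y = S -> z = z' -> w = w' -> x + (y + (z + w)) = z' + w'.
  by move=> -> -> -> ->; rewrite addrA addNr add0r.
exact: (E _ _ _ _ _ _ _ B0 B1 B2 B3).
Qed.
End N.

Section P.
Variables (R : realType) (p r : nat).
Local Notation Mat := (Mat R p r).

Lemma sq_ge0 k (u : 'M[R]_(k, 1)) : 0 <= (u^T *m u) 0 0.
Proof.
rewrite mxE; apply: sumr_ge0 => l _; rewrite mxE -expr2; exact: sqr_ge0.
Qed.

Lemma quadE k (U : 'M[R]_(k, p)) (w : 'cV[R]_p) :
  w^T *m (U^T *m U) *m w = (U *m w)^T *m (U *m w).
Proof. by rewrite trmx_mul !mulmxA. Qed.

Lemma Ups_unit (X : Mat) : Ups X -> Amat X \in unitmx.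
Proof.
move=> HX; apply: contraT => nu.
have : \det (Amat X)^T == 0.
  by rewrite det_tr; move: nu; rewrite unitmxE unitfE negbK.
case/det0P => v v0 hv.
have w0 : v^T != 0 by rewrite -(inj_eq (@trmx_inj _ _ _)) trmxK trmx0.
have := HX _ w0.
have hA : X0 X *m v^T = X1 X *m v^T.
  apply/eqP; rewrite -subr_eq0 -mulmxBl; apply/eqP.
  by move: (congr1 trmx hv); rewrite trmx_mul trmxK trmx0.
rewrite !mulmxDr !mulmxDl mulmxN mulNmx !quadE hA.
rewrite addNr add0r mxE.
have := sq_ge0 (X2 X *m v^T); have := sq_ge0 (X3 X *m v^T).
lra.
Qed.

Lemma X0g (X : Mat) (g : 'M[R]_p) : X0 (X *m g) = X0 X *m g.
Proof. by rewrite /X0 mul_usub_mx. Qed.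
Lemma X1g (X : Mat) (g : 'M[R]_p) : X1 (X *m g) = X1 X *m g.
Proof. by rewrite /X1 mul_usub_mx mul_dsub_mx. Qed.
Lemma X2g (X : Mat) (g : 'M[R]_p) : X2 (X *m g) = X2 X *m g.
Proof. by rewrite /X2 mul_usub_mx !mul_dsub_mx. Qed.
Lemma X3g (X : Mat) (g : 'M[R]_p) : X3 (X *m g) = X3 X *m g.
Proof. by rewrite /X3 !mul_dsub_mx. Qed.

Lemma invAg (X : Mat) (g : 'M[R]_p) : Amat X \in unitmx -> g \in unitmx ->
  g *m invmx (Amat (X *m g)) = invmx (Amat X).
Proof.
move=> uA ug.
have hA : Amat (X *m g) = Amat X *m g by rewrite /Amat X0g X1g mulmxBl.
symmetry; apply: inv_uniq.
by rewrite mulmxA -hA mulmxV // hA unitmx_mul uA ug.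
Qed.

Lemma GL_inv (X : Mat) (g : 'M[R]_p) : Ups X -> g \in unitmx ->
  Ups (X *m g) /\ PhiRe (X *m g) = PhiRe X /\ PhiIm (X *m g) = PhiIm X.
Proof.
move=> HX ug; have uA := Ups_unit HX.
split; last first.
  by rewrite /PhiRe /PhiIm X2g X3g -!mulmxA invAg.
move=> v v0.
have gv0 : g *m v != 0.
  apply: contra v0 => /eqP H; apply/eqP.
  by rewrite -[v]mul1mx -(mulVmx ug) -mulmxA H mulmx0.
have hM k (U : 'M[R]_(k, p)) : (U *m g)^T *m (U *m g) = g^T *m (U^T *m U) *m g.
  by rewrite trmx_mul !mulmxA.
rewrite /Ups /= X0g X1g X2g X3g !hM.
set N := - ((X0 X)^T *m X0 X) + (X1 X)^T *m X1 X + (X2 X)^T *m X2 X + (X3 X)^T *m X3 X.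
have -> : - (g^T *m ((X0 X)^T *m X0 X) *m g) + g^T *m ((X1 X)^T *m X1 X) *m g
   + g^T *m ((X2 X)^T *m X2 X) *m g + g^T *m ((X3 X)^T *m X3 X) *m g = g^T *m N *m g.
  by rewrite /N !mulmxDr !mulmxDl mulmxN mulNmx.
have -> : v^T *m (g^T *m N *m g) *m v = (g *m v)^T *m N *m (g *m v).
  by rewrite trmx_mul !mulmxA.
exact: HX.
Qed.

Lemma kap1 a b a' b' (X : Mat) : Amat X \in unitmx ->
  rkappa (fW a b (@X2 R p r)) (fW a' b' (@X2 R p r)) X -
  rkappa (fW a b (@X3 R p r)) (fW a' b' (@X3 R p r)) X = 0.
Proof.
move=> uA.
rewrite (kappa_val a b a' b' (or_introl erefl) (or_introl erefl) uA).
rewrite (kappa_val a b a' b' (or_intror erefl) (or_intror erefl) uA).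
set B := invmx (Amat X).
have Z1 : \sum_(i < r) \sum_(j < p) ((X2 (E3 R i j) *m B) a b * (X2 (E3 R i j) *m B) a' b') = 0.
  apply: big1 => i _; apply: big1 => j _.
  by case: (E3_blocks R i j) => _ _ -> _; rewrite mul0mx mxE mul0r.
have Z2 : \sum_(i < r) \sum_(j < p) ((X3 (E2 R i j) *m B) a b * (X3 (E2 R i j) *m B) a' b') = 0.
  apply: big1 => i _; apply: big1 => j _.
  by case: (E2_blocks R i j) => _ _ _ ->; rewrite mul0mx mxE mul0r.
have Eq : \sum_(i < r) \sum_(j < p) ((X2 (E2 R i j) *m B) a b * (X2 (E2 R i j) *m B) a' b') =
          \sum_(i < r) \sum_(j < p) ((X3 (E3 R i j) *m B) a b * (X3 (E3 R i j) *m B) a' b').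
  apply: eq_bigr => i _; apply: eq_bigr => j _.
  by case: (E2_blocks R i j) => _ _ -> _; case: (E3_blocks R i j) => _ _ _ ->.
have E (x y z w : R) : y = 0 -> z = 0 -> x = w -> x + y - (z + w) = 0.
  by move=> -> -> ->; rewrite addr0 add0r subrr.
exact: (E _ _ _ _ Z1 Z2 Eq).
Qed.

Lemma kap2 a b a' b' (X : Mat) : Amat X \in unitmx ->
  rkappa (fW a b (@X2 R p r)) (fW a' b' (@X3 R p r)) X +
  rkappa (fW a b (@X3 R p r)) (fW a' b' (@X2 R p r)) X = 0.
Proof.
move=> uA.
rewrite (kappa_val a b a' b' (or_introl erefl) (or_intror erefl) uA).
rewrite (kappa_val a b a' b' (or_intror erefl) (or_introl erefl) uA).
set B := invmx (Amat X).
have Z1 : \sum_(i < r) \sum_(j < p) ((X2 (E2 R i j) *m B) a b * (X3 (E2 R i j) *m B) a' b') = 0.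
  apply: big1 => i _; apply: big1 => j _.
  by case: (E2_blocks R i j) => _ _ _ ->; rewrite mul0mx [X in _ * X]mxE mulr0.
have Z2 : \sum_(i < r) \sum_(j < p) ((X2 (E3 R i j) *m B) a b * (X3 (E3 R i j) *m B) a' b') = 0.
  apply: big1 => i _; apply: big1 => j _.
  by case: (E3_blocks R i j) => _ _ -> _; rewrite mul0mx [X in X * _]mxE mul0r.
have Z3 : \sum_(i < r) \sum_(j < p) ((X3 (E2 R i j) *m B) a b * (X2 (E2 R i j) *m B) a' b') = 0.
  apply: big1 => i _; apply: big1 => j _.
  by case: (E2_blocks R i j) => _ _ _ ->; rewrite mul0mx [X in X * _]mxE mul0r.
have Z4 : \sum_(i < r) \sum_(j < p) ((X3 (E3 R i j) *m B) a b * (X2 (E3 R i j) *m B) a' b') = 0.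
  apply: big1 => i _; apply: big1 => j _.
  by case: (E3_blocks R i j) => _ _ -> _; rewrite mul0mx [X in _ * X]mxE mulr0.
have E (x y z w : R) : x = 0 -> y = 0 -> z = 0 -> w = 0 -> x + y + (z + w) = 0.
  by move=> -> -> -> ->; rewrite !addr0.
exact: (E _ _ _ _ Z1 Z2 Z3 Z4).
Qed.
End P.

Unset Implicit Arguments.

Theorem proposition5p2 (R : realType) (p r : nat) (hp : (0 < p)%N) (hr : (0 < r)%N) :
  orthogonal_harmonic_family (@Ups R p r) (@Phi_components R p r) /\
  (forall phi, @Phi_components R p r phi ->
     GLp_invariant (@Ups R p r) phi /\
     coord_twice_derivable (@Ups R p r) phi.1 /\
     coord_twice_derivable (@Ups R p r) phi.2).
Proof.
split.
  move=> phi psi [a _ [b _ <-]] [a' _ [b' _ <-]]; split => X HX; have uA := Ups_unit HX.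
    split.
      change (rtau (fW a b (@X2 R p r)) X = 0); exact: (tau_zero a b (or_introl erefl) uA).
    change (rtau (fW a b (@X3 R p r)) X = 0); exact: (tau_zero a b (or_intror erefl) uA).
  split; [exact: (kap1 a b a' b' uA) | exact: (kap2 a b a' b' uA)].
move=> phi [a _ [b _ <-]]; split.
  move=> X g HX ug; have [H1 [H2 H3]] := GL_inv HX ug.
  by split => //=; rewrite H2 H3.
split=> X HX; have uA := Ups_unit HX.
  exact: (deriv_ok a b (or_introl erefl) uA).
exact: (deriv_ok a b (or_intror erefl) uA).
Qed.
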